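(* Let $\Gamma\in[0,1]$, $d_0\in(0,1]$, and $\gamma_N=\Gamma/(N-1)$. For $N\ge2$ define $h_N(k)$, $k=1,\dots,N$, by $h_N(N)=N$ and $h_N(k)=k\Big[1+\gamma_N(N-k)\frac{h_N(k+1)}{k+1}\Big]$ for $k<N$; equivalently $h_N(k)=k\big[1+(N-k)\gamma_N\big[1+(N-k-1)\gamma_N\big[1+\cdots\big]\big]\big]$ (the nested expression terminating after $N-k$ levels). Let $k_N\in\{1,\dots,N\}$ satisfy $k_N/N\to d_0$. Then $$\lim_{N\to\infty}\frac{h_N(k_N)}{N}=\frac{d_0}{1-\Gamma+\Gamma d_0}.$$ *)

(* Defs.v *)
From Stdlib Require Import Reals Lra Lia.
Open Scope R_scope.

Definition gammaN (Gam : R) (N : nat) : R := Gam / (INR N - 1).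

(* hrec Gam N j = h_N(N - j), computed by recursion on j = N - k
   (the number of nesting levels):
     h_N(N) = N,
     h_N(k) = k * (1 + gamma_N (N - k) h_N(k+1)/(k+1)). *)
Fixpoint hrec (Gam : R) (N : nat) (j : nat) : R :=
  match j with
  | O => INR N
  | S j' => INR (N - S j') *
            (1 + gammaN Gam N * INR (S j') * hrec Gam N j' / INR (N - j'))
  end.

Definition h (Gam : R) (N k : nat) : R := hrec Gam N (N - k).

(* Main.v *)
Require Import Defs.
From Stdlib Require Import Reals Lra Lia.
From Coquelicot Require Import Coquelicot.
Open Scope R_scope.

Fixpoint G (g : R) (j : nat) : R :=
  match j with O => 1 | S j' => 1 + g * INR (S j') * G g j' end.

Lemma G_S g j : G g (S j) = 1 + g * INR (S j) * G g j.
Proof. reflexivity. Qed.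

Lemma hrec_G Gam N : forall j, (j <= N)%nat ->
  hrec Gam N j = INR (N - j) * G (gammaN Gam N) j.
Proof.
  induction j as [|j IH]; intros Hj.
  - simpl. rewrite Nat.sub_0_r. ring.
  - cbn [hrec]. rewrite G_S, IH by lia.
    assert (INR (N - j) <> 0) by (apply not_0_INR; lia).
    field. auto.
Qed.

Lemma div_le x y z w : 0 < y -> 0 < w -> x * w <= z * y -> x / y <= z / w.
Proof.
  intros Hy Hw H.
  assert (E1 : x / y = (x * w) * (/ y * / w)) by (field; lra).
  assert (E2 : z / w = (z * y) * (/ y * / w)) by (field; lra).
  rewrite E1, E2. apply Rmult_le_compat_r; auto.
  apply Rlt_le, Rmult_lt_0_compat; apply Rinv_0_lt_compat; auto.
Qed.

Lemma G_bounds g rho : 0 <= g -> 0 <= rho < 1 -> forall j, g * INR j <= rho ->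
  1 / (1 - g * INR j + g * rho / (1 - rho)) <= G g j <= 1 / (1 - g * INR j).
Proof.
  intros Hg Hr.
  set (th := g * rho / (1 - rho)).
  assert (Hth : th * (1 - rho) = g * rho) by (unfold th; field; lra).
  assert (Hth0 : 0 <= th).
  { unfold th, Rdiv. apply Rmult_le_pos; [nra|]. apply Rlt_le, Rinv_0_lt_compat; lra. }
  induction j as [|j IH]; intros Hj.
  - simpl. split.
    + change (G g 0) with 1. apply Rle_trans with (1/1); [apply div_le; lra | right; field].
    + simpl. right. field.
  - rewrite S_INR in *. rewrite G_S, S_INR.
    set (a := g * INR j) in *.
    assert (Ha0 : 0 <= a) by (unfold a; apply Rmult_le_pos; auto; apply pos_INR).
    assert (Ea : g * (INR j + 1) = a + g) by (unfold a; ring).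
    rewrite Ea in *.
    destruct IH as [IL IU]; [lra|].
    split.
    + apply Rle_trans with (1 + (a + g) * (1 / (1 - a + th))).
      * replace (1 + (a + g) * (1 / (1 - a + th))) with ((1 - a + th + (a+g)) / (1 - a + th))
          by (field; lra).
        apply div_le; try lra. nra.
      * apply Rplus_le_compat_l. apply Rmult_le_compat_l; lra.
    + apply Rle_trans with (1 + (a + g) * (1 / (1 - (a + g)))).
      * apply Rplus_le_compat_l. apply Rmult_le_compat_l; [lra|].
        apply Rle_trans with (1 := IU). apply div_le; lra.
      * right. field. lra.
Qed.

Lemma lim_invN : is_lim_seq (fun n => / INR n) 0.
Proof.
  pose proof (is_lim_seq_inv _ _ is_lim_seq_INR) as H.
  simpl in H. apply H. discriminate.
Qed.

Theorem mainTheorem11 (Gam d0 : R) (kN : nat -> nat) :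
  0 <= Gam <= 1 ->
  0 < d0 <= 1 ->
  (forall N : nat, (2 <= N)%nat -> (1 <= kN N <= N)%nat) ->
  Un_cv (fun N => INR (kN N) / INR N) d0 ->
  Un_cv (fun N => h Gam N (kN N) / INR N) (d0 / (1 - Gam + Gam * d0)).
Proof.
  intros HG Hd Hk Hu.
  apply is_lim_seq_Reals in Hu.
  set (u := fun N => INR (kN N) / INR N) in *.
  set (x := Gam * (1 - d0)).
  assert (Hx : 0 <= x < 1) by (unfold x; split; nra).
  set (rho := (x + 1) / 2).
  assert (Hr : 0 <= rho < 1) by (unfold rho; lra).
  set (gam := fun N => gammaN Gam N).
  set (aN := fun N => gam N * INR (N - kN N)).
  set (th := fun N => gam N * rho / (1 - rho)).
  assert (HN2 : forall N, (2 <= N)%nat -> 2 <= INR N).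
  { intros N HN. replace 2 with (INR 2) by (simpl; ring). apply le_INR; auto. }
  assert (Lgam : is_lim_seq gam 0).
  { apply is_lim_seq_ext_loc with (fun N => Gam * / INR N / (1 - / INR N)).
    - exists 2%nat. intros N HN. specialize (HN2 N HN). unfold gam, gammaN.
      field. lra.
    - replace 0 with (Gam * 0 / (1 - 0)) by field.
      apply is_lim_seq_div'; [| |lra].
      + pose proof (is_lim_seq_scal_l _ Gam 0 lim_invN) as HH. simpl in HH.
        exact HH.
      + apply is_lim_seq_minus'; [apply is_lim_seq_const | apply lim_invN]. }
  assert (LaN : is_lim_seq aN x).
  { apply is_lim_seq_ext_loc with (fun N => Gam * (1 - u N) / (1 - / INR N)).
    - exists 2%nat. intros N HN. pose proof (HN2 N HN). destruct (Hk N HN).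
      unfold aN, gam, gammaN, u. rewrite minus_INR by auto.
      field. lra.
    - replace x with (Gam * (1 - d0) / (1 - 0)) by (unfold x; field).
      apply is_lim_seq_div'; [| |lra].
      + apply is_lim_seq_mult'; [apply is_lim_seq_const|].
        apply is_lim_seq_minus'; [apply is_lim_seq_const | apply Hu].
      + apply is_lim_seq_minus'; [apply is_lim_seq_const | apply lim_invN]. }
  assert (Lth : is_lim_seq th 0).
  { replace 0 with (0 * rho / (1 - rho)) by (field; lra).
    apply is_lim_seq_div'; [| apply is_lim_seq_const | lra].
    apply is_lim_seq_mult'; [apply Lgam | apply is_lim_seq_const]. }
  assert (LL : is_lim_seq (fun N => u N / (1 - aN N + th N)) (d0 / (1 - x))).
  { replace (d0 / (1 - x)) with (d0 / (1 - x + 0)) by (f_equal; ring).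
    apply is_lim_seq_div'; [apply Hu| |lra].
    apply is_lim_seq_plus'; [|apply Lth].
    apply is_lim_seq_minus'; [apply is_lim_seq_const | apply LaN]. }
  assert (LU : is_lim_seq (fun N => u N / (1 - aN N)) (d0 / (1 - x))).
  { apply is_lim_seq_div'; [apply Hu| |lra].
    apply is_lim_seq_minus'; [apply is_lim_seq_const | apply LaN]. }
  assert (Ev : exists N0, forall N, (N0 <= N)%nat -> aN N <= rho).
  { apply is_lim_seq_Reals in LaN.
    destruct (LaN ((1 - x) / 2)) as [N0 HN0]; [lra|].
    exists N0. intros N HN. specialize (HN0 N HN). unfold R_dist in HN0.
    apply Rabs_def2 in HN0. unfold rho. lra. }
  destruct Ev as [N0 HN0].
  apply is_lim_seq_Reals.
  replace (d0 / (1 - Gam + Gam * d0)) with (d0 / (1 - x)) by (unfold x; f_equal; ring).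
  refine (is_lim_seq_le_le_loc (fun N => u N / (1 - aN N + th N)) _
    (fun N => u N / (1 - aN N)) _ _ LL LU).
  exists (Nat.max N0 2). intros N HN.
  assert (HN' : (2 <= N)%nat) by lia.
  assert (Ha : aN N <= rho) by (apply HN0; lia).
  pose proof (HN2 N HN'). destruct (Hk N HN') as [Hk1 Hk2].
  assert (Hg0 : 0 <= gam N).
  { unfold gam, gammaN, Rdiv. apply Rmult_le_pos; [lra|].
    apply Rlt_le, Rinv_0_lt_compat; lra. }
  destruct (G_bounds (gam N) rho Hg0 Hr (N - kN N) Ha) as [B1 B2].
  assert (Eh : h Gam N (kN N) / INR N = u N * G (gam N) (N - kN N)).
  { unfold h, u, gam. rewrite hrec_G by lia.
    replace (N - (N - kN N))%nat with (kN N) by lia. field. lra. }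
  rewrite Eh.
  assert (Hu0 : 0 <= u N).
  { unfold u, Rdiv. apply Rmult_le_pos; [apply pos_INR|].
    apply Rlt_le, Rinv_0_lt_compat; lra. }
  fold (aN N) in B1, B2. fold (th N) in B1.
  split.
  - replace (u N / (1 - aN N + th N)) with (u N * (1 / (1 - aN N + th N))) by (unfold Rdiv; ring).
    apply Rmult_le_compat_l; auto.
  - replace (u N / (1 - aN N)) with (u N * (1 / (1 - aN N))) by (unfold Rdiv; ring).
    apply Rmult_le_compat_l; auto.
Qed.
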